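(* Let $k\ge 4$ and let $p,p'$ be two POPs of size $k$ having the same set $I$ of isolated vertices, such that $k-1\in I$ and $k-3,k-2,k\notin I$. Suppose that in both $p$ and $p'$, each of the labels $k-2$ and $k$ is greater than every label $x\in[k-3]\setminus I$. Suppose that the subposets of $p$ and $p'$ induced by $[k-3]\setminus I$ coincide, and that $k<_p k-2$ while $k-2<_{p'}k$. Then $p\sim p'$.
   Context: A partially ordered pattern (POP) $p$ of size $k$ is a partial order $\le_p$ on $[k]=\{1,\dots,k\}$. A permutation $\pi=\pi_1\cdots\pi_n$ contains $p$ if there are indices $i_1<\dots<i_k$ with $\pi_{i_j}<\pi_{i_m}$ whenever $j<_p m$; otherwise it avoids $p$. $\mathfrak S_n(p)$ is the set of permutations of $[n]$ avoiding $p$, and $p\sim q$ (Wilf-equivalence) means $|\mathfrak S_n(p)|=|\mathfrak S_n(q)|$ for all $n\ge 1$. A vertex is isolated if it is comparable to no other vertex. *)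

(* Defs.v *)
From mathcomp Require Import all_boot all_order all_fingroup.
Set Implicit Arguments. Unset Strict Implicit. Unset Printing Implicit Defensive.

(* A partially ordered pattern (POP) of size k, on labels [k] = {1,...,k}
   (as natural numbers), is given by its strict order relation
   [lt x y] meaning x <_p y. *)
Definition in_k (k x : nat) : bool := (1 <= x <= k).

Definition is_pop (k : nat) (lt : rel nat) : Prop :=
  [/\ (forall x y, lt x y -> in_k k x && in_k k y),
      (forall x, ~~ lt x x) &
      (forall x y z, lt x y -> lt y z -> lt x z)].

(* Permutations of [n] are represented by 'S_n (values 0..n-1, which is
   order-isomorphic to [n]).  s contains the POP lt of size k iff there are
   positions i_1 < ... < i_k with s(i_j) < s(i_m) whenever j <_p m.
   Position i_j (j = 1..k) is f (j-1) for f : 'I_k -> 'I_n. *)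
Definition contains_pop (k : nat) (lt : rel nat) (n : nat) (s : 'S_n) : bool :=
  [exists f : {ffun 'I_k -> 'I_n},
     [forall a : 'I_k, forall b : 'I_k,
        ((a < b)%N ==> (f a < f b)%N) &&
        (lt a.+1 b.+1 ==> (s (f a) < s (f b))%N)]].

Definition num_avoiders (k : nat) (lt : rel nat) (n : nat) : nat :=
  #|[set s : 'S_n | ~~ contains_pop k lt s]|.

Definition wilf_equiv (k : nat) (p q : rel nat) : Prop :=
  forall n : nat, 1 <= n -> num_avoiders k p n = num_avoiders k q n.

Definition isolated (k : nat) (lt : rel nat) (x : nat) : bool :=
  [forall y : 'I_k, ~~ lt x y.+1 && ~~ lt y.+1 x].

(* Main.v *)
Require Import Defs.
From mathcomp Require Import all_boot all_order all_fingroup.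
From mathcomp Require Import zify.
Set Implicit Arguments. Unset Strict Implicit. Unset Printing Implicit Defensive.

Lemma all2_size (T U : Type) (r : T -> U -> bool) s t : all2 r s t -> size s = size t.
Proof. by elim: s t => [|x s IH] [|y t] //= /andP[_ /IH ->]. Qed.

Lemma perm_consE (V t : seq nat) a : a \in V -> perm_eq (a :: t) V = perm_eq t (rem a V).
Proof.
move=> aV; have H := perm_to_rem aV.
by rewrite (permPr H) perm_cons.
Qed.

Lemma count_rem1 (P : pred nat) (V : seq nat) a : a \in V -> count P (rem a V) = count P V - P a.
Proof.
move=> aV; rewrite (seq.permP (perm_to_rem aV) P) /=.
by rewrite addKn.
Qed.

Lemma ex_min_pred (P : pred nat) (V : seq nat) : has P V ->
  exists m, [/\ m \in V, P m & forall y, y \in V -> P y -> m <= y].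
Proof.
elim: V => [|x V IH] //= /orP[Px | hV].
  case hV: (has P V).
    have [m [mV Pm Hm]] := IH hV.
    case: (leqP x m) => xm.
      exists x; split => //; first exact: mem_head.
      move=> y; rewrite inE => /orP[/eqP -> //|yV Py].
      exact: leq_trans xm (Hm y yV Py).
    exists m; split => //; first by rewrite inE mV orbT.
    move=> y; rewrite inE => /orP[/eqP -> _|yV Py]; [exact: ltnW|exact: Hm].
  exists x; split => //; first exact: mem_head.
  move=> y; rewrite inE => /orP[/eqP -> //|yV Py].
  by move/hasPn: hV => /(_ y yV); rewrite Py.
have [m [mV Pm Hm]] := IH hV.
case Px: (P x).
  case: (leqP x m) => xm.
    exists x; split => //; first exact: mem_head.
    move=> y; rewrite inE => /orP[/eqP -> //|yV Py].
    exact: leq_trans xm (Hm y yV Py).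
  exists m; split => //; first by rewrite inE mV orbT.
  move=> y; rewrite inE => /orP[/eqP -> _|yV Py]; [exact: ltnW|exact: Hm].
exists m; split => //; first by rewrite inE mV orbT.
move=> y; rewrite inE => /orP[/eqP ->|yV Py]; first by rewrite Px.
exact: Hm.
Qed.

Lemma ex_max (V : seq nat) : V != [::] ->
  exists m, m \in V /\ forall y, y \in V -> y <= m.
Proof.
elim: V => [|x V IH] //= _.
case: V IH => [|z V] IH.
  by exists x; split; [exact: mem_head| move=> y; rewrite inE => /eqP ->].
have [m [mV Hm]] := IH isT.
case: (leqP x m) => xm.
  exists m; split; first by rewrite inE mV orbT.
  by move=> y; rewrite inE => /orP[/eqP ->|/Hm].
exists x; split; first exact: mem_head.
move=> y; rewrite inE => /orP[/eqP -> //|/Hm ym]; exact: leq_trans ym (ltnW xm).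
Qed.

Lemma count_perms_eq (V : seq nat) (P : pred (seq nat)) (L : seq (seq nat)) :
  uniq L -> (forall t, (t \in L) = perm_eq t V && P t) -> count P (permutations V) = size L.
Proof.
move=> uL HL; rewrite -size_filter; apply: perm_size.
apply: uniq_perm => //; first by rewrite filter_uniq // permutations_uniq.
by move=> t; rewrite mem_filter HL mem_permutations andbC.
Qed.

Definition gapc (d : nat) (C : pred nat) := fun d' y => (d.+2 <= d') ==> C y.

Lemma hd_all (C : pred nat) d s t : size s = size t -> all (fun d' => d.+2 <= d') s ->
  all2 (gapc d C) s t = all C t.
Proof.
elim: s t => [|e s IH] [|y t] //= [st] /andP[de hs].
by rewrite /gapc de /= IH.
Qed.

Lemma hd_true (C : pred nat) d s t : size s = size t -> all C t -> all2 (gapc d C) s t.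
Proof.
elim: s t => [|e s IH] [|y t] //= [st] /andP[cy ht].
by rewrite /gapc cy implybT /= IH.
Qed.

Lemma mem_cons_map (x : nat) (l : seq (seq nat)) t :
  (t \in map (cons x) l) = if t is y :: t' then (y == x) && (t' \in l) else false.
Proof.
apply/mapP/idP.
  by case=> t' t'l ->; rewrite eqxx.
case: t => // y t' /andP[/eqP -> t'l]; by exists t'.
Qed.

Lemma mem_cons2_map (x z : nat) (l : seq (seq nat)) t :
  (t \in map (fun u => x :: z :: u) l) =
  if t is y :: y' :: t' then [&& y == x, y' == z & t' \in l] else false.
Proof.
apply/mapP/idP.
  by case=> t' t'l ->; rewrite !eqxx.
case: t => // y [|y' t'] // /and3P[/eqP -> /eqP -> t'l]; by exists t'.
Qed.

Lemma memrem (s : seq nat) x y : uniq s -> (y \in rem x s) = (y != x) && (y \in s).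
Proof. by move=> us; rewrite (mem_rem_uniq x us) inE. Qed.

Section Core.
Variable B : nat -> nat -> bool.
Hypothesis Bmono : forall a a' v v', a <= a' -> v <= v' -> B a v -> B a' v'.

Fixpoint okP (s t : seq nat) := match s, t with
  | d :: s', x :: t' => all2 (gapc d (fun y => ~~ (B d y && (y < x)))) s' t' && okP s' t'
  | _, _ => true end.
Fixpoint okQ (s t : seq nat) := match s, t with
  | d :: s', x :: t' => all2 (gapc d (fun y => ~~ (x < y))) s' t' && okQ s' t'
  | _, _ => true end.
Definition validP s t := all2 B s t && okP s t.
Definition validQ s t := all2 B s t && okQ s t.
Definition FP s V := count (validP s) (permutations V).
Definition FQ s V := count (validQ s) (permutations V).


Lemma optP1 d s' V x0 : x0 \in V -> B d x0 -> (forall y, y \in V -> B d y -> x0 <= y) ->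
  (forall x t, perm_eq (x :: t) V -> validP (d :: s') (x :: t) -> x = x0) ->
  FP (d :: s') V = FP s' (rem x0 V).
Proof.
move=> x0V Bx0 minx0 H.
rewrite /FP; have -> : count (validP s') (permutations (rem x0 V)) = size (map (cons x0) (filter (validP s') (permutations (rem x0 V)))) by rewrite size_map size_filter.
apply: count_perms_eq.
  by rewrite map_inj_uniq ?filter_uniq ?permutations_uniq //; move=> a b [].
case=> [|x t]; rewrite mem_cons_map.
  by apply/esym/negbTE; apply/negP => /andP[pv _]; have := perm_mem pv x0; rewrite x0V in_nil.
apply/idP/idP.
  move=> /andP[/eqP -> ]; rewrite mem_filter mem_permutations => /andP[vt pt].
  rewrite perm_consE // pt /=; rewrite /validP /= Bx0 /=.
  case/andP: vt => a2 ok; rewrite a2 ok andbT /=.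
  apply: hd_true; first exact: all2_size a2.
  apply/allP => y yt; apply/negP => /andP[Bdy ylt].
  have yV : y \in V by apply: (mem_rem (x:=x0)); rewrite -(perm_mem pt).
  by have := minx0 y yV Bdy; rewrite leqNgt ylt.
move=> /andP[pv vv]; have ex := H x t pv vv; subst x.
rewrite eqxx mem_filter mem_permutations -perm_consE // pv andbT.
rewrite /validP /validQ; by case/andP: vv => /= /andP[_ ->] /andP[_ ->]. 
Qed.

Lemma optQ1 d s' V x0 : x0 \in V -> B d x0 -> (forall y, y \in V -> y <= x0) ->
  (forall x t, perm_eq (x :: t) V -> validQ (d :: s') (x :: t) -> x = x0) ->
  FQ (d :: s') V = FQ s' (rem x0 V).
Proof.
move=> x0V Bx0 maxx0 H.
rewrite /FQ; have -> : count (validQ s') (permutations (rem x0 V)) = size (map (cons x0) (filter (validQ s') (permutations (rem x0 V)))) by rewrite size_map size_filter.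
apply: count_perms_eq.
  by rewrite map_inj_uniq ?filter_uniq ?permutations_uniq //; move=> a b [].
case=> [|x t]; rewrite mem_cons_map.
  by apply/esym/negbTE; apply/negP => /andP[pv _]; have := perm_mem pv x0; rewrite x0V in_nil.
apply/idP/idP.
  move=> /andP[/eqP -> ]; rewrite mem_filter mem_permutations => /andP[vt pt].
  rewrite perm_consE // pt /=; rewrite /validQ /= Bx0 /=.
  case/andP: vt => a2 ok; rewrite a2 ok andbT /=.
  apply: hd_true; first exact: all2_size a2.
  apply/allP => y yt; apply/negP => ylt.
  have yV : y \in V by apply: (mem_rem (x:=x0)); rewrite -(perm_mem pt).
  by have := maxx0 y yV; rewrite leqNgt ylt.
move=> /andP[pv vv]; have ex := H x t pv vv; subst x.
rewrite eqxx mem_filter mem_permutations -perm_consE // pv andbT.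
rewrite /validP /validQ; by case/andP: vv => /= /andP[_ ->] /andP[_ ->].
Qed.

Lemma optP2 d s'' V x0 x1 : uniq V -> x0 \in V -> B d x0 ->
  (forall y, y \in V -> B d y -> x0 <= y) ->
  x1 \in rem x0 V -> B d x1 -> (forall y, y \in rem x0 V -> B d y -> x1 <= y) ->
  (forall v, B d.+1 v -> B d v) -> all (fun e => d.+2 <= e) s'' ->
  FP (d :: d.+1 :: s'') V = FP (d.+1 :: s'') (rem x0 V) + FP s'' (rem x0 (rem x1 V)).
Proof.
move=> uV x0V Bx0 minx0 x1r Bx1 minx1 Hadj Hs.
have := x1r; rewrite memrem // => /andP[x10 x1V].
have x0r1 : x0 \in rem x1 V by rewrite memrem // eq_sym x10.
set L1 := map (cons x0) (filter (validP (d.+1 :: s'')) (permutations (rem x0 V))).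
set L2 := map (fun u => x1 :: x0 :: u) (filter (validP s'') (permutations (rem x0 (rem x1 V)))).
have -> : FP (d.+1 :: s'') (rem x0 V) + FP s'' (rem x0 (rem x1 V)) = size (L1 ++ L2).
  by rewrite size_cat !size_map !size_filter.
apply: count_perms_eq.
  rewrite cat_uniq !map_inj_uniq ?filter_uniq ?permutations_uniq //; last first.
  - by move=> a b [].
  - by move=> a b [].
  rewrite andbT /=; apply/hasPn => u /mapP[u' _ ->]; rewrite mem_cons_map.
  by rewrite (negbTE x10).
case=> [|x [|y t]]; rewrite mem_cat mem_cons_map mem_cons2_map.
- by apply/esym/negbTE; apply/negP => /andP[pv _]; have := perm_mem pv x0; rewrite x0V in_nil.
- by rewrite mem_filter /= andbF /validP /= !andbF.
apply/idP/idP.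
  case/orP.
    move=> /andP[/eqP -> ]; rewrite mem_filter mem_permutations => /andP[vt pt].
    rewrite perm_consE // pt /=.
    move: vt; rewrite /validP /= Bx0 /= => /andP[/andP[-> a2] /andP[h2 ->]].
    rewrite a2 h2 !andbT /=.
    have st : size s'' = size t by exact: all2_size a2.
    apply: (@hd_true (fun z => ~~ (B d z && (z < x0))) d (d.+1 :: s'') (y :: t)); first by rewrite /= st.
    apply/allP => z zt; apply/negP => /andP[Bdz zlt].
    have zV : z \in V by apply: (mem_rem (x:=x0)); rewrite -(perm_mem pt).
    by have := minx0 z zV Bdz; rewrite leqNgt zlt.
  move=> /and3P[/eqP -> /eqP -> ]; rewrite mem_filter mem_permutations => /andP[vt pt].
  rewrite perm_consE // perm_consE // pt /=.
  move: vt; rewrite /validP /= Bx1 => /andP[a2 ok]; rewrite a2 ok !andbT /=.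
  have st : size s'' = size t by exact: all2_size a2.
  have zV : forall z, z \in t -> (z \in V) && (z != x0) && (z != x1).
    move=> z zt; move: zt; rewrite (perm_mem pt) memrem ?rem_uniq // => /andP[zx0].
    by rewrite memrem // zx0 => /andP[-> ->].
  rewrite (Bmono (leqnSn d) (leqnn x0) Bx0) /gapc ltnn /=.
  apply/andP; split.
    apply: hd_true => //; apply/allP => z /zV /andP[/andP[zV' zx0] zx1].
    apply/negP => /andP[Bdz zlt].
    have zr : z \in rem x0 V by rewrite memrem // zx0.
    by have := minx1 z zr Bdz; rewrite leqNgt zlt.
  apply: hd_true => //; apply/allP => z /zV /andP[/andP[zV' zx0] zx1].
  apply/negP => /andP[/Hadj Bdz zlt].
  by have := minx0 z zV' Bdz; rewrite leqNgt zlt.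
move=> /andP[pv].
rewrite /validP /= => /andP[/and3P[Bdx Bdy a2] /andP[/andP[_ h2] /andP[h3 ok]]].
have st : size s'' = size t by exact: all2_size a2.
have := @hd_all (fun z => ~~ (B d z && (z < x))) d s'' t st Hs.
rewrite h2 => /esym/allP hC.
have xV : x \in V by rewrite -(perm_mem pv) mem_head.
case: (eqVneq x x0) => [ex | xx0].
  subst x.
  rewrite /= mem_filter mem_permutations -perm_consE // pv andbT /=.
  by rewrite Bdy a2 h3 ok.
have x0lt : x0 < x by rewrite ltn_neqAle eq_sym xx0 (minx0 x xV Bdx).
have x0t : x0 \in y :: t.
  by move: (perm_mem pv x0); rewrite x0V inE eq_sym (negbTE xx0).
have x0nt : x0 \notin t by apply/negP => /hC; rewrite Bx0 x0lt.
have yx0 : y = x0 by move: x0t; rewrite inE (negbTE x0nt) orbF => /eqP.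
subst y.
have xr : x \in rem x0 V by rewrite memrem // xx0.
case: (eqVneq x x1) => [ex | xx1]; last first.
  have x1lt : x1 < x by rewrite ltn_neqAle eq_sym xx1 (minx1 x xr Bdx).
  have : x1 \in x :: x0 :: t by rewrite (perm_mem pv).
  rewrite !inE eq_sym (negbTE xx1) (negbTE x10) /= => /hC.
  by rewrite Bx1 x1lt.
subst x.
rewrite /= !eqxx /= mem_filter mem_permutations -perm_consE // -perm_consE // pv andbT /=.
by rewrite a2 ok.
Qed.

Lemma optQ2 d s'' W top w2 : uniq W -> top \in W ->
  (forall y, y \in W -> y <= top) ->
  w2 \in rem top W -> (forall y, y \in rem top W -> y <= w2) -> B d w2 ->
  all (fun e => d.+2 <= e) s'' ->
  FQ (d :: d.+1 :: s'') W = FQ (d.+1 :: s'') (rem top W) + FQ s'' (rem top (rem w2 W)).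
Proof.
move=> uW topW maxtop w2r maxw2 Bw2 Hs.
have := w2r; rewrite memrem // => /andP[w2t w2W].
have topr : top \in rem w2 W by rewrite memrem // eq_sym w2t.
have Btop : B d top by apply: Bmono (leqnn d) (maxtop w2 w2W) Bw2.
set L1 := map (cons top) (filter (validQ (d.+1 :: s'')) (permutations (rem top W))).
set L2 := map (fun u => w2 :: top :: u) (filter (validQ s'') (permutations (rem top (rem w2 W)))).
have -> : FQ (d.+1 :: s'') (rem top W) + FQ s'' (rem top (rem w2 W)) = size (L1 ++ L2).
  by rewrite size_cat !size_map !size_filter.
apply: count_perms_eq.
  rewrite cat_uniq !map_inj_uniq ?filter_uniq ?permutations_uniq //; last first.
  - by move=> a b [].
  - by move=> a b [].
  rewrite andbT /=; apply/hasPn => u /mapP[u' _ ->]; rewrite mem_cons_map.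
  by rewrite (negbTE w2t).
case=> [|x [|y t]]; rewrite mem_cat mem_cons_map mem_cons2_map.
- by apply/esym/negbTE; apply/negP => /andP[pv _]; have := perm_mem pv top; rewrite topW in_nil.
- by rewrite mem_filter /= andbF /validQ /= !andbF.
apply/idP/idP.
  case/orP.
    move=> /andP[/eqP -> ]; rewrite mem_filter mem_permutations => /andP[vt pt].
    rewrite perm_consE // pt /=.
    move: vt; rewrite /validQ /= Btop /= => /andP[/andP[-> a2] /andP[h2 ->]].
    rewrite a2 h2 !andbT /=.
    have st : size s'' = size t by exact: all2_size a2.
    apply: (@hd_true (fun z => ~~ (top < z)) d (d.+1 :: s'') (y :: t)); first by rewrite /= st.
    apply/allP => z zt; apply/negP => zlt.
    have zV : z \in W by apply: (mem_rem (x:=top)); rewrite -(perm_mem pt).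
    by have := maxtop z zV; rewrite leqNgt zlt.
  move=> /and3P[/eqP -> /eqP -> ]; rewrite mem_filter mem_permutations => /andP[vt pt].
  rewrite perm_consE // perm_consE // pt /=.
  move: vt; rewrite /validQ /= Bw2 => /andP[a2 ok]; rewrite a2 ok !andbT /=.
  have st : size s'' = size t by exact: all2_size a2.
  have zV : forall z, z \in t -> (z \in W) && (z != top) && (z != w2).
    move=> z zt; move: zt; rewrite (perm_mem pt) memrem ?rem_uniq // => /andP[zx0].
    by rewrite memrem // zx0 => /andP[-> ->].
  rewrite (Bmono (leqnSn d) (leqnn top) Btop) /gapc ltnn /=.
  apply/andP; split.
    apply: hd_true => //; apply/allP => z /zV /andP[/andP[zV' zx0] zx1].
    apply/negP => zlt.
    have zr : z \in rem top W by rewrite memrem // zx0.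
    by have := maxw2 z zr; rewrite leqNgt zlt.
  apply: hd_true => //; apply/allP => z /zV /andP[/andP[zV' zx0] zx1].
  apply/negP => zlt.
  by have := maxtop z zV'; rewrite leqNgt zlt.
move=> /andP[pv].
rewrite /validQ /= => /andP[/and3P[Bdx Bdy a2] /andP[/andP[_ h2] /andP[h3 ok]]].
have st : size s'' = size t by exact: all2_size a2.
have := @hd_all (fun z => ~~ (x < z)) d s'' t st Hs.
rewrite h2 => /esym/allP hC.
have xV : x \in W by rewrite -(perm_mem pv) mem_head.
case: (eqVneq x top) => [ex | xx0].
  subst x.
  rewrite /= mem_filter mem_permutations -perm_consE // pv andbT /=.
  by rewrite Bdy a2 h3 ok.
have x0lt : x < top by rewrite ltn_neqAle xx0 (maxtop x xV).
have x0t : top \in y :: t.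
  by move: (perm_mem pv top); rewrite topW in_cons eq_sym (negbTE xx0).
have x0nt : top \notin t by apply/negP => /hC; rewrite x0lt.
have yx0 : y = top by move: x0t; rewrite inE (negbTE x0nt) orbF => /eqP.
subst y.
have xr : x \in rem top W by rewrite memrem // xx0.
case: (eqVneq x w2) => [ex | xx1]; last first.
  have x1lt : x < w2 by rewrite ltn_neqAle xx1 (maxw2 x xr).
  have : w2 \in x :: top :: t by rewrite (perm_mem pv).
  rewrite !inE eq_sym (negbTE xx1) (negbTE w2t) /= => /hC.
  by rewrite x1lt.
subst x.
rewrite /= !eqxx /= mem_filter mem_permutations -perm_consE // -perm_consE // pv andbT /=.
by rewrite a2 ok.
Qed.

Lemma sorted_gt d s : sorted ltn (d :: s) -> all (fun e => d < e) s.
Proof. by move=> /= H; have := order_path_min ltn_trans H. Qed.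

Definition notadj d (s : seq nat) : bool := if s is e :: _ then e != d.+1 else true.

Lemma sorted_gap d s : sorted ltn (d :: s) -> notadj d s ->
  all (fun e => d.+2 <= e) s.
Proof.
case: s => // e s /= /andP[de pe] ne.
have de2 : d.+2 <= e by rewrite ltn_neqAle eq_sym ne de.
rewrite de2 /=; apply/allP => z zs.
have := order_path_min ltn_trans pe => /allP /(_ z zs) ez.
exact: leq_trans de2 (ltnW ez).
Qed.

Lemma count_rem_pos (P : pred nat) V a : a \in V -> P a -> count P (rem a V) = (count P V).-1.
Proof. by move=> aV Pa; rewrite count_rem1 // Pa subn1. Qed.

Theorem core s V W : sorted ltn s ->
  (forall e, e \in s -> e.+1 \in s -> forall v, B e.+1 v -> B e v) ->
  uniq V -> uniq W -> size V = size s -> size W = size s ->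
  (forall e, e \in s -> count (B e) V = count (B e) W) ->
  FP s V = FQ s W.
Proof.
have [n] := ubnP (size s); elim: n s V W => // n IH s V W.
case: s => [|d s'] szn srt adj uV uW sV sW cnt.
  by case: V W sV sW {uV uW cnt} => [|? ?] [|? ?].
have dS : d \in d :: s' by exact: mem_head.
have c_eq := cnt d dS.
have gt := sorted_gt srt.
have srt' : sorted ltn s' by exact: path_sorted srt.
have adj' : forall e, e \in s' -> e.+1 \in s' -> forall v, B e.+1 v -> B e v.
  by move=> e es e1s; apply: adj; rewrite inE ?es ?e1s orbT.
case: (posnP (count (B d) V)) => c0.
  rewrite /FP /FQ (@count_perms_eq V _ [::]) ?(@count_perms_eq W _ [::]) //.
    case=> [|x t]; rewrite in_nil; first by apply/esym/negbTE; rewrite /validQ /= andbF.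
    apply/esym/negbTE/negP => /andP[pv /andP[/= /andP[Bdx _] _]].
    have xV : x \in W by rewrite -(perm_mem pv) mem_head.
    have : 0 < count (B d) W by rewrite -has_count; apply/hasP; exists x.
    by rewrite -c_eq c0.
  case=> [|x t]; rewrite in_nil; first by apply/esym/negbTE; rewrite /validP /= andbF.
  apply/esym/negbTE/negP => /andP[pv /andP[/= /andP[Bdx _] _]].
  have xV : x \in V by rewrite -(perm_mem pv) mem_head.
  have : 0 < count (B d) V by rewrite -has_count; apply/hasP; exists x.
  by rewrite c0.
have [x0 [x0V Bx0 minx0]] : exists m, [/\ m \in V, B d m & forall y, y \in V -> B d y -> m <= y].
  by apply: ex_min_pred; rewrite has_count.
have [top [topW maxtop]] : exists m, m \in W /\ forall y, y \in W -> y <= m.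
  by apply: ex_max; case: (W) sW.
have Btop : B d top.
  have : has (B d) W by rewrite has_count -c_eq.
  by case/hasP => y yW Bdy; apply: Bmono (leqnn d) (maxtop y yW) Bdy.
have cntrem : forall s0 : seq nat, {subset s0 <= s'} -> forall e, e \in s0 ->
    count (B e) (rem x0 V) = count (B e) (rem top W).
  move=> s0 sub e es0; have es := sub e es0.
  have de : d <= e by apply: ltnW; move/allP: gt => /(_ e es).
  rewrite !count_rem_pos //; first by rewrite cnt // inE es orbT.
    exact: Bmono de (leqnn _) Btop.
  exact: Bmono de (leqnn _) Bx0.
have IH1 : FP s' (rem x0 V) = FQ s' (rem top W).
  apply: IH => //.
  - exact: rem_uniq.
  - exact: rem_uniq.
  - by rewrite size_rem // sV.
  - by rewrite size_rem // sW.
  - exact: cntrem.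
have opt1 : notadj d s' \/ count (B d) V = 1 ->
    FP (d :: s') V = FQ (d :: s') W.
  move=> Hc.
  rewrite (optP1 x0V Bx0 minx0) ?(optQ1 topW Btop maxtop) //.
    move=> x t pv /andP[/= /andP[Bdx a2] /andP[h2 _]].
    have xW : x \in W by rewrite -(perm_mem pv) mem_head.
    apply/eqP/negPn/negP => xt.
    case: Hc => Hc.
      have st : size s' = size t by exact: all2_size a2.
      have := @hd_all (fun z => ~~ (x < z)) d s' t st (sorted_gap srt Hc).
      rewrite h2 => /esym/allP hC.
      have : top \in t by move: (perm_mem pv top); rewrite topW in_cons eq_sym (negbTE xt).
      move=> /hC; rewrite ltn_neqAle xt maxtop //.
    have : 0 < count (B d) (rem top W).
      by rewrite -has_count; apply/hasP; exists x => //; rewrite memrem // xt.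
    by rewrite count_rem_pos // -c_eq Hc.
  move=> x t pv /andP[/= /andP[Bdx a2] /andP[h2 _]].
  have xV : x \in V by rewrite -(perm_mem pv) mem_head.
  apply/eqP/negPn/negP => xt.
  case: Hc => Hc.
    have st : size s' = size t by exact: all2_size a2.
    have := @hd_all (fun z => ~~ (B d z && (z < x))) d s' t st (sorted_gap srt Hc).
    rewrite h2 => /esym/allP hC.
    have : x0 \in t by move: (perm_mem pv x0); rewrite x0V in_cons eq_sym (negbTE xt).
    move=> /hC; rewrite Bx0 ltn_neqAle eq_sym xt minx0 //.
  have : 0 < count (B d) (rem x0 V).
    by rewrite -has_count; apply/hasP; exists x => //; rewrite memrem // xt.
  by rewrite count_rem_pos // Hc.
case Es: s' opt1 IH1 cntrem gt srt' adj' srt adj szn cnt => [|e s''] opt1 IH1 cntrem gt srt' adj' srt adj szn cnt.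
  by apply: opt1; left.
case: (eqVneq e d.+1) => [ed | ned]; last by apply: opt1; left.
subst e.
case: (eqVneq (count (B d) V) 1) => [c1 | c2]; first by apply: opt1; right.
have c2' : 1 < count (B d) V by rewrite ltn_neqAle eq_sym c2 c0.
have [x1 [x1r Bx1 minx1]] : exists m, [/\ m \in rem x0 V, B d m & forall y, y \in rem x0 V -> B d y -> m <= y].
  by apply: ex_min_pred; rewrite has_count count_rem_pos // -subn1 subn_gt0.
have [w2 [w2r maxw2]] : exists m, m \in rem top W /\ forall y, y \in rem top W -> y <= m.
  apply: ex_max; apply/eqP => E.
  by have := size_rem topW; rewrite E sW Es.
have Hadj : forall v, B d.+1 v -> B d v by apply: adj; rewrite ?inE ?eqxx ?orbT.
have Hs'' : all (fun e => d.+2 <= e) s'' by have := sorted_gt srt'.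
have Bw2 : B d w2.
  have : has (B d) (rem top W) by rewrite has_count count_rem_pos // -c_eq -subn1 subn_gt0.
  by case/hasP => y yW Bdy; apply: Bmono (leqnn d) (maxw2 y yW) Bdy.
have := x1r; rewrite memrem // => /andP[x10 x1V].
have x0r1 : x0 \in rem x1 V by rewrite memrem // eq_sym x10.
have := w2r; rewrite memrem // => /andP[w2t w2W].
have topr : top \in rem w2 W by rewrite memrem // eq_sym w2t.
rewrite (optP2 uV x0V Bx0 minx0 x1r Bx1 minx1 Hadj Hs'') (optQ2 uW topW maxtop w2r maxw2 Bw2 Hs'').
rewrite IH1; congr (_ + _).
apply: IH => //.
- by apply: ltnW; exact: szn.
- exact: path_sorted srt'.
- by move=> e es e1s; apply: adj'; rewrite inE ?es ?e1s orbT.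
- by rewrite !rem_uniq.
- by rewrite !rem_uniq.
- by rewrite (size_rem x0r1) (size_rem x1V) sV Es.
- by rewrite (size_rem topr) (size_rem w2W) sW Es.
move=> e es.
have de : d <= e by move/allP: Hs'' => /(_ e es) /ltnW /ltnW.
have Be : forall v, B d v -> B e v by move=> v; apply: Bmono de (leqnn v).
rewrite !count_rem_pos ?Be //.
by rewrite cnt // !inE es !orbT.
Qed.

End Core.

Fixpoint allpo (T : Type) (r : T -> T -> bool) (L : seq T) : bool :=
  if L is x :: L' then all (r x) L' && allpo r L' else true.

Lemma all2_map (T : Type) (r : nat -> nat -> bool) (f g : T -> nat) L :
  all2 r (map f L) (map g L) = all (fun x => r (f x) (g x)) L.
Proof. by elim: L => //= x L ->. Qed.

Lemma okP_map B (T : Type) (f g : T -> nat) L :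
  okP B (map f L) (map g L) =
  allpo (fun x y => ((f x).+2 <= f y) ==> ~~ (B (f x) (g y) && (g y < g x))) L.
Proof. by elim: L => //= x L ->; rewrite all2_map. Qed.

Lemma okQ_map (T : Type) (f g : T -> nat) L :
  okQ (map f L) (map g L) =
  allpo (fun x y => ((f x).+2 <= f y) ==> ~~ (g x < g y)) L.
Proof. by elim: L => //= x L ->; rewrite all2_map. Qed.

Lemma allpo_sorted (T : eqType) (lt : rel T) (r : T -> T -> bool) L :
  irreflexive lt -> transitive lt -> sorted lt L ->
  allpo r L = all (fun x => all (fun y => lt x y ==> r x y) L) L.
Proof.
move=> irr tr; elim: L => //= x L IH pL.
have hx := order_path_min tr pL.
rewrite IH ?(path_sorted pL) // irr /=.
congr andb.
  by apply: eq_in_all => y yL; move/allP: hx => /(_ y yL) ->.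
apply: eq_in_all => z zL; rewrite /=.
have xz : lt x z by move/allP: hx => /(_ z zL).
have -> : lt z x = false.
  by apply/negP => zx; move: (irr x); rewrite (tr _ _ _ xz zx).
by [].
Qed.

Lemma all2_nth (r : nat -> nat -> bool) s t : all2 r s t ->
  forall i, i < size s -> r (nth 0 s i) (nth 0 t i).
Proof.
elim: s t => [|x s IH] [|y t] //= /andP[rxy a2] [|i] //= ilt.
exact: IH.
Qed.


Lemma ar1 m : (m.+2 < m.+1) = false. Proof. lia. Qed.
Lemma ar2 m : (m.+2 == m.+1) = false. Proof. lia. Qed.
Lemma ar3 m : (m.+3 < m.+1) = false. Proof. lia. Qed.
Lemma ar4 m : (m.+3 == m.+1) = false. Proof. lia. Qed.
Lemma ar5 m : (m.+3 == m.+2) = false. Proof. lia. Qed.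
Lemma ar8 m : (m.+2 != m.+4). Proof. lia. Qed.
Lemma ar9 m : (m.+4 != m.+2). Proof. lia. Qed.
Lemma ar6 m : m.+1 < m.+4. Proof. lia. Qed.
Lemma ar7 m : m.+2 < m.+4. Proof. lia. Qed.

Ltac ctr := exfalso; repeat match goal with
  | H : is_true (_ <= _) |- _ => revert H
  | H : @eq nat _ _ |- _ => revert H end; clear; lia.

Section Bridge.
Variables (m : nat) (p p' : rel nat).
Local Notation k := m.+4.
Hypothesis Hpop : is_pop k p.
Hypothesis Hpop' : is_pop k p'.
Hypothesis Hiso : forall x, in_k k x -> isolated k p x = isolated k p' x.
Hypothesis Hk1 : isolated k p m.+3.
Hypothesis Hk3 : ~~ isolated k p m.+1.
Hypothesis Hk2 : ~~ isolated k p m.+2.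
Hypothesis Hk : ~~ isolated k p m.+4.
Hypothesis Habove : forall x, 1 <= x <= m.+1 -> ~~ isolated k p x -> p x m.+2 && p x m.+4.
Hypothesis Habove' : forall x, 1 <= x <= m.+1 -> ~~ isolated k p x -> p' x m.+2 && p' x m.+4.
Hypothesis Hsame : forall x y, 1 <= x <= m.+1 -> 1 <= y <= m.+1 ->
  ~~ isolated k p x -> ~~ isolated k p y -> p x y = p' x y.
Hypothesis Hpk : p m.+4 m.+2.
Hypothesis Hpk' : p' m.+2 m.+4.

Lemma noniso_l (q : rel nat) x y : q x y -> in_k k y -> ~~ isolated k q x.
Proof.
move=> qxy /andP[y1 yk]; apply/forallPn.
have yk' : y.-1 < k by rewrite prednK.
exists (Ordinal yk') => /=; by rewrite prednK // qxy.
Qed.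

Lemma noniso_r (q : rel nat) x y : q x y -> in_k k x -> ~~ isolated k q y.
Proof.
move=> qxy /andP[x1 xk]; apply/forallPn.
have xk' : x.-1 < k by rewrite prednK.
exists (Ordinal xk') => /=; by rewrite prednK // qxy andbF.
Qed.

Lemma inkP (q : rel nat) x y : is_pop k q -> q x y -> in_k k x /\ in_k k y.
Proof. by case=> H _ _ /H /andP[]. Qed.

Definition J (i : nat) : bool := ~~ isolated k p i.+1.

Lemma irr (q : rel nat) x : is_pop k q -> q x x -> False.
Proof. by case=> _ H _ qxx; move: (H x); rewrite qxx. Qed.

Lemma trn (q : rel nat) x y z : is_pop k q -> q x y -> q y z -> q x z.
Proof. by case=> _ _ H; apply: H. Qed.

Lemma p_char x y : p x y ->
  [\/ [/\ 0 < x, x <= m.+1, 0 < y & y <= m.+1],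
      [/\ 0 < x, x <= m.+1, J x.-1 & (y = m.+2 \/ y = m.+4)] |
      x = m.+4 /\ y = m.+2].
Proof.
move=> pxy; have [/andP[x1 xk] /andP[y1 yk]] := inkP Hpop pxy.
have nix := noniso_l pxy (introT andP (conj y1 yk)).
have niy := noniso_r pxy (introT andP (conj x1 xk)).
have x3 : x != m.+3 by apply: contraNneq nix => ->.
have y3 : y != m.+3 by apply: contraNneq niy => ->.
case: (leqP x m.+1) => xm.
  case: (leqP y m.+1) => ym; first by constructor 1.
  constructor 2; split => //; first by rewrite /J prednK.
  move: y3 yk ym; clear; move=> /eqP y3 yk ym; lia.
have xE : x = m.+2 \/ x = m.+4 by move: x3 xk xm; clear; move=> /eqP ? ? ?; lia.
case: (leqP y m.+1) => ym.
  have /andP[py2 py4] := Habove (introT andP (conj y1 ym)) niy.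
  by exfalso; case: xE => xE; subst x; apply: (irr Hpop (trn Hpop pxy _)).
have yE : y = m.+2 \/ y = m.+4 by move: y3 yk ym; clear; move=> /eqP ? ? ?; lia.
case: xE => xE; case: yE => yE; subst x y.
- by exfalso; apply: (irr Hpop pxy).
- by exfalso; apply: (irr Hpop (trn Hpop pxy Hpk)).
- by constructor 3.
- by exfalso; apply: (irr Hpop pxy).
Qed.

Lemma iso_eq x : 0 < x <= k -> isolated k p' x = isolated k p x.
Proof. by move=> H; rewrite Hiso. Qed.

Lemma p'_char x y : p' x y ->
  [\/ [/\ 0 < x, x <= m.+1, 0 < y, y <= m.+1 & p x y],
      [/\ 0 < x, x <= m.+1, J x.-1 & (y = m.+2 \/ y = m.+4)] |
      x = m.+2 /\ y = m.+4].
Proof.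
move=> pxy; have [/andP[x1 xk] /andP[y1 yk]] := inkP Hpop' pxy.
have nix := noniso_l pxy (introT andP (conj y1 yk)).
have niy := noniso_r pxy (introT andP (conj x1 xk)).
rewrite iso_eq ?x1 // in nix; rewrite iso_eq ?y1 // in niy.
have x3 : x != m.+3 by apply: contraNneq nix => ->.
have y3 : y != m.+3 by apply: contraNneq niy => ->.
case: (leqP x m.+1) => xm.
  case: (leqP y m.+1) => ym.
    constructor 1; split => //.
    by rewrite Hsame ?x1 ?y1.
  constructor 2; split => //; first by rewrite /J prednK.
  move: y3 yk ym; clear; move=> /eqP y3 yk ym; lia.
have xE : x = m.+2 \/ x = m.+4 by move: x3 xk xm; clear; move=> /eqP ? ? ?; lia.
case: (leqP y m.+1) => ym.
  have /andP[py2 py4] := Habove' (introT andP (conj y1 ym)) niy.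
  by exfalso; case: xE => xE; subst x; apply: (irr Hpop' (trn Hpop' pxy _)).
have yE : y = m.+2 \/ y = m.+4 by move: y3 yk ym; clear; move=> /eqP ? ? ?; lia.
case: xE => xE; case: yE => yE; subst x y.
- by exfalso; apply: (irr Hpop' pxy).
- by constructor 3.
- by exfalso; apply: (irr Hpop' (trn Hpop' pxy Hpk')).
- by exfalso; apply: (irr Hpop' pxy).
Qed.

Section Perm.
Variable n : nat.

Definition wit (s : 'S_n) (a v : nat) (g : {ffun 'I_m.+1 -> 'I_n}) : bool :=
  [forall i : 'I_m.+1, forall j : 'I_m.+1,
     ((i < j) ==> (g i < g j)) && (p i.+1 j.+1 ==> (s (g i) < s (g j)))] &&
  [forall i : 'I_m.+1, (g i < a) && (J i ==> (s (g i) < v))].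

Definition occ (s : 'S_n) (a v : nat) : bool := [exists g, wit s a v g].
Definition dom (s : 'S_n) (c : 'I_n) : bool := occ s c (s c).

Lemma occ_mono s a a' v v' : a <= a' -> v <= v' -> occ s a v -> occ s a' v'.
Proof.
move=> aa vv /existsP[g /andP[H1 /forallP H2]]; apply/existsP; exists g.
rewrite /wit H1 /=; apply/forallP => i; case/andP: (H2 i) => ga gv.
rewrite (leq_trans ga aa) /=; apply/implyP => /(implyP gv) lt.
exact: leq_trans lt vv.
Qed.

Lemma relJ i j : i < m.+1 -> j < m.+1 -> p i.+1 j.+1 -> J i && J j.
Proof.
move=> im jm pij.
rewrite /J (noniso_l pij) ?(noniso_r pij) // /in_k; apply/andP; split; lia.
Qed.

Lemma occ_nd s a v : occ s a v ->
  exists g, wit s a v g && [forall i : 'I_m.+1, J i ==> ~~ dom s (g i)].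
Proof.
move: a; have [N] := ubnP v; elim: N v => // N IH v vN a.
move=> /existsP[g wg].
case Hnd: [forall i : 'I_m.+1, J i ==> ~~ dom s (g i)]; first by exists g; rewrite wg.
move/negbT: Hnd => /forallPn[i]; rewrite negb_imply negbK => /andP[Ji di].
case/andP: wg => _ /forallP /(_ i) /andP[gia /implyP /(_ Ji) giv].
have [g' /andP[wg' nd']] := IH (s (g i)) (leq_trans giv vN) (g i) di.
exists g'; rewrite nd' andbT /wit.
case/andP: wg' => -> /forallP H /=; apply/forallP => j.
case/andP: (H j) => gj gjv; rewrite (ltn_trans gj gia) /=.
by apply/implyP => /(implyP gjv) lt; exact: ltn_trans lt giv.
Qed.

Lemma occ_transfer (s s' : 'S_n) :
  (forall c, ~~ dom s c -> s' c = s c) -> (forall c, dom s c -> occ s c (s' c)) ->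
  forall a v : nat, occ s' a v = occ s a v.
Proof.
move=> H1 H2 a v; apply/idP/idP.
  move=> /existsP[g wg].
  case Hnd: [forall i : 'I_m.+1, J i ==> ~~ dom s (g i)].
    apply/existsP; exists g.
    case/andP: wg => /forallP W1 /forallP W2; apply/andP; split.
      apply/forallP => i; apply/forallP => j.
      case/andP: (forallP (W1 i) j) => -> /= /implyP Hr; apply/implyP => pij.
      have /andP[Ji Jj] := relJ (ltn_ord i) (ltn_ord j) pij.
      rewrite -(H1 _ (implyP (forallP Hnd i) Ji)) -(H1 _ (implyP (forallP Hnd j) Jj)).
      exact: Hr.
    apply/forallP => i; case/andP: (W2 i) => -> /= /implyP Hv; apply/implyP => Ji.
    rewrite -(H1 _ (implyP (forallP Hnd i) Ji)); exact: Hv.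
  move/negbT: Hnd => /forallPn[i]; rewrite negb_imply negbK => /andP[Ji di].
  case/andP: wg => _ /forallP /(_ i) /andP[gia /implyP /(_ Ji) giv].
  exact: occ_mono (ltnW gia) (ltnW giv) (H2 _ di).
move=> /occ_nd[g /andP[wg /forallP nd]]; apply/existsP; exists g.
case/andP: wg => /forallP W1 /forallP W2; apply/andP; split.
  apply/forallP => i; apply/forallP => j.
  case/andP: (forallP (W1 i) j) => -> /= /implyP Hr; apply/implyP => pij.
  have /andP[Ji Jj] := relJ (ltn_ord i) (ltn_ord j) pij.
  rewrite (H1 _ (implyP (nd i) Ji)) (H1 _ (implyP (nd j) Jj)).
  exact: Hr.
apply/forallP => i; case/andP: (W2 i) => -> /= /implyP Hv; apply/implyP => Ji.
rewrite (H1 _ (implyP (nd i) Ji)); exact: Hv.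
Qed.

Lemma occ_adj s (d : 'I_n) v : dom s d -> occ s d.+1 v -> occ s d v.
Proof.
move=> dd /existsP[g wg].
case Hlt: [forall i : 'I_m.+1, g i < d].
  apply/existsP; exists g; rewrite /wit; case/andP: wg => -> /forallP W2 /=.
  apply/forallP => i; case/andP: (W2 i) => _ ->; by rewrite (forallP Hlt i).
move/negbT: Hlt => /forallPn[i]; rewrite -leqNgt => dgi.
case/andP: wg => /forallP W1 /forallP W2.
have gmax : g ord_max = d.
  case/andP: (W2 ord_max) => gm _.
  apply/val_inj/eqP; rewrite eqn_leq -ltnS gm /=.
  case: (ltnP i (@ord_max m)) => iM.
    by case/andP: (forallP (W1 i) ord_max) => /implyP /(_ iM) gl _; exact: leq_trans dgi (ltnW gl).
  have -> : (@ord_max m) = i by apply/val_inj/eqP; rewrite eqn_leq iM -ltnS ltn_ord.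
  exact: dgi.
have Jm : J (@ord_max m) by exact: Hk3.
case/andP: (W2 ord_max) => _ /implyP /(_ Jm); rewrite gmax => dv.
exact: occ_mono (leqnn _) (ltnW dv) dd.
Qed.

Lemma cases4 (x : nat) : x < k -> [\/ x < m.+1, x = m.+1, x = m.+2 | x = m.+3].
Proof.
move=> xk; case: (ltnP x m.+1) => h; first by constructor 1.
case: (eqVneq x m.+1) => h1; first by constructor 2.
case: (eqVneq x m.+2) => h2; first by constructor 3.
constructor 4; move: xk h h1 h2; clear; lia.
Qed.

Definition mkF (g : {ffun 'I_m.+1 -> 'I_n}) (a b c : 'I_n) (x : nat) : 'I_n :=
  if x < m.+1 then g (inord x) else if x == m.+1 then a else if x == m.+2 then b else c.

Lemma mkF_cases g a b c x : x < k ->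
  [\/ x < m.+1 /\ mkF g a b c x = g (inord x), x = m.+1 /\ mkF g a b c x = a,
      x = m.+2 /\ mkF g a b c x = b | x = m.+3 /\ mkF g a b c x = c].
Proof.
rewrite /mkF => /cases4 [h|h|h|h].
- by constructor 1; rewrite h.
- by constructor 2; rewrite h ltnn eqxx.
- by constructor 3; rewrite h ar1 ar2 eqxx.
- by constructor 4; rewrite h ar3 ar4 ar5.
Qed.

Lemma inordK' (i : 'I_m.+1) : nat_of_ord (inord i : 'I_k) = i.
Proof. have h := ltn_ord i; rewrite inordK //; move: h; clear; lia. Qed.

Lemma contains_build (s : 'S_n) (q : rel nat) (a c : 'I_n) (g : {ffun 'I_m.+1 -> 'I_n}) :
  a.+2 <= c ->
  [forall i : 'I_m.+1, forall j : 'I_m.+1,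
     ((i < j) ==> (g i < g j)) && (p i.+1 j.+1 ==> (s (g i) < s (g j)))] ->
  (forall i : 'I_m.+1, g i < a) ->
  (forall x y, q x y -> [\/ [/\ 0 < x, x <= m.+1, 0 < y, y <= m.+1 & p x y],
      [/\ 0 < x, x <= m.+1, J x.-1 & (y = m.+2 \/ y = m.+4)] |
      [/\ x = m.+2 \/ x = m.+4 , y = m.+2 \/ y = m.+4 & x != y]]) ->
  (forall i : 'I_m.+1, J i -> s (g i) < s a) ->
  (forall i : 'I_m.+1, J i -> s (g i) < s c) ->
  (q m.+2 m.+4 -> s a < s c) -> (q m.+4 m.+2 -> s c < s a) ->
  contains_pop k q s.
Proof.
move=> ac W1 Wa qchar Ja Jc Hac Hca.
have bn : a.+1 < n by apply: leq_trans ac (ltnW (ltn_ord c)).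
set b : 'I_n := Ordinal bn.
apply/existsP; exists [ffun i : 'I_k => mkF g a b c i].
apply/forallP => i; apply/forallP => j; rewrite !ffunE.
have gmon : forall x y : 'I_m.+1, x < y -> g x < g y.
  by move=> x y xy; case/andP: (forallP (forallP W1 x) y) => /implyP /(_ xy).
have grel : forall x y : 'I_m.+1, p x.+1 y.+1 -> s (g x) < s (g y).
  by move=> x y xy; case/andP: (forallP (forallP W1 x) y) => _ /implyP /(_ xy).
have ga : forall x, g x < a := Wa.
apply/andP; split; apply/implyP.
  move=> ij.
  case: (mkF_cases g a b c (ltn_ord i)) => [[hi ->]|[hi ->]|[hi ->]|[hi ->]];
  case: (mkF_cases g a b c (ltn_ord j)) => [[hj ->]|[hj ->]|[hj ->]|[hj ->]];
  rewrite /= ?hi ?hj in ij *; try ctr.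
  - apply: gmon; rewrite !inordK //; lia.
  - exact: ga.
  - by have := ga (inord i); rewrite /=; lia.
  - by have := ga (inord i); lia.
  - by [].
  - lia.
  - lia.
move=> pij; case: (qchar _ _ pij) => [[h1 h2 h3 h4 h5]|[h1 h2 h3 h4]|[h1 h2 h3]].
- case: (mkF_cases g a b c (ltn_ord i)) => [[hi ->]|[hi _]|[hi _]|[hi _]]; try ctr.
  case: (mkF_cases g a b c (ltn_ord j)) => [[hj ->]|[hj _]|[hj _]|[hj _]]; try ctr.
  by apply: grel; rewrite !inordK.
- case: (mkF_cases g a b c (ltn_ord i)) => [[hi ->]|[hi _]|[hi _]|[hi _]]; try ctr.
  have Ji : J (inord i : 'I_m.+1) by rewrite inordK.
  case: h4 => h4.
    case: (mkF_cases g a b c (ltn_ord j)) => [[hj _]|[hj ->]|[hj _]|[hj _]]; try ctr.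
    exact: Ja.
  case: (mkF_cases g a b c (ltn_ord j)) => [[hj _]|[hj _]|[hj _]|[hj ->]]; try ctr.
  exact: Jc.
- case: h1 => h1; case: h2 => h2; rewrite h1 h2 in h3 pij; try (by rewrite eqxx in h3).
  + case: (mkF_cases g a b c (ltn_ord i)) => [[hi _]|[hi ->]|[hi _]|[hi _]]; try ctr.
    case: (mkF_cases g a b c (ltn_ord j)) => [[hj _]|[hj _]|[hj _]|[hj ->]]; try ctr.
    exact: Hac.
  + case: (mkF_cases g a b c (ltn_ord i)) => [[hi _]|[hi _]|[hi _]|[hi ->]]; try ctr.
    case: (mkF_cases g a b c (ltn_ord j)) => [[hj _]|[hj ->]|[hj _]|[hj _]]; try ctr.
    exact: Hca.
Qed.

Lemma contains_extract (s : 'S_n) (q : rel nat) : contains_pop k q s ->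
  (forall i j : 'I_m.+1, p i.+1 j.+1 -> q i.+1 j.+1) ->
  exists (a c : 'I_n) (g : {ffun 'I_m.+1 -> 'I_n}), a.+2 <= c /\
  [forall i : 'I_m.+1, forall j : 'I_m.+1,
     ((i < j) ==> (g i < g j)) && (p i.+1 j.+1 ==> (s (g i) < s (g j)))] /\
  (forall i : 'I_m.+1, g i < a) /\
  (forall i : 'I_m.+1, q i.+1 m.+2 -> s (g i) < s a) /\
  (forall i : 'I_m.+1, q i.+1 m.+4 -> s (g i) < s c) /\
  (q m.+2 m.+4 -> s a < s c) /\ (q m.+4 m.+2 -> s c < s a).
Proof.
move=> /existsP[f /forallP Hf] pq.
have finc : forall x y : 'I_k, x < y -> f x < f y.
  by move=> x y xy; case/andP: (forallP (Hf x) y) => /implyP /(_ xy).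
have frel : forall x y : 'I_k, q x.+1 y.+1 -> s (f x) < s (f y).
  by move=> x y xy; case/andP: (forallP (Hf x) y) => _ /implyP /(_ xy).
have e1 : nat_of_ord (inord m.+1 : 'I_k) = m.+1 by rewrite inordK // ar6.
have e2 : nat_of_ord (inord m.+2 : 'I_k) = m.+2 by rewrite inordK // ar7.
have e3 : nat_of_ord (inord m.+3 : 'I_k) = m.+3 by rewrite inordK.
exists (f (inord m.+1)), (f (inord m.+3)), [ffun i : 'I_m.+1 => f (inord i)].
split; [|split; [|split; [|split; [|split; [|split]]]]].
- have h1 := finc (inord m.+1) (inord m.+2); have h2 := finc (inord m.+2) (inord m.+3).
  rewrite e1 e2 e3 in h1 h2; have := h1 (ltnSn _); have := h2 (ltnSn _).
  move=> u v; apply: (leq_trans _ u); exact: v.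
- apply/forallP => i; apply/forallP => j; rewrite !ffunE; apply/andP; split; apply/implyP => h.
    by apply: finc; rewrite !inordK'.
  by apply: frel; rewrite !inordK'; apply: pq.
- by move=> i; rewrite ffunE; apply: finc; rewrite inordK' e1.
- by move=> i h; rewrite ffunE; apply: frel; rewrite inordK' e1.
- by move=> i h; rewrite ffunE; apply: frel; rewrite inordK' e3.
- by move=> h; apply: frel; rewrite e1 e3.
- by move=> h; apply: frel; rewrite e1 e3.
Qed.

Lemma Jrange (i : 'I_m.+1) : 0 < i.+1 <= m.+1.
Proof. by rewrite ltnS ltn_ord. Qed.

Lemma contP (s : 'S_n) : contains_pop k p s =
  [exists a : 'I_n, exists c : 'I_n, (a.+2 <= c) && occ s a (s c) && (s c < s a)].
Proof.
apply/idP/idP.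
  move=> /contains_extract /(_ (fun i j h => h)) [a [c [g [ac [W1 [ga [_ [Jc [_ Hca]]]]]]]]].
  apply/existsP; exists a; apply/existsP; exists c.
  rewrite ac (Hca Hpk) andbT /=; apply/existsP; exists g.
  rewrite /wit W1 /=; apply/forallP => i; rewrite ga /=; apply/implyP => Ji.
  by apply: Jc; case/andP: (Habove (Jrange i) Ji).
move=> /existsP[a /existsP[c /andP[/andP[ac /existsP[g /andP[W1 /forallP W2]]] sca]]].
apply: (@contains_build s p a c g) => //.
- by move=> i; case/andP: (W2 i).
- move=> x y pxy; case: (p_char pxy) => [[h1 h2 h3 h4]|h|[-> ->]].
  + by constructor 1.
  + by constructor 2.
  + by constructor 3; split; [right|left|rewrite ar9].
- move=> i Ji; apply: ltn_trans sca; by case/andP: (W2 i) => _ /implyP; apply.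
- by move=> i Ji; case/andP: (W2 i) => _ /implyP; apply.
- by move=> h; exfalso; apply: (irr Hpop (trn Hpop h Hpk)).
Qed.

Lemma contQ (s : 'S_n) : contains_pop k p' s =
  [exists a : 'I_n, exists c : 'I_n, (a.+2 <= c) && occ s a (s a) && (s a < s c)].
Proof.
apply/idP/idP.
  have H' : forall i j : 'I_m.+1, p i.+1 j.+1 -> p' i.+1 j.+1.
    move=> i j pij; have /andP[Ji Jj] := relJ (ltn_ord i) (ltn_ord j) pij.
    by rewrite -Hsame ?Jrange.
  move=> /contains_extract /(_ H') [a [c [g [ac [W1 [ga [Ja [_ [Hac _]]]]]]]]].
  apply/existsP; exists a; apply/existsP; exists c.
  rewrite ac (Hac Hpk') andbT /=; apply/existsP; exists g.
  rewrite /wit W1 /=; apply/forallP => i; rewrite ga /=; apply/implyP => Ji.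
  by apply: Ja; case/andP: (Habove' (Jrange i) Ji).
move=> /existsP[a /existsP[c /andP[/andP[ac /existsP[g /andP[W1 /forallP W2]]] sac]]].
apply: (@contains_build s p' a c g) => //.
- by move=> i; case/andP: (W2 i).
- move=> x y pxy; case: (p'_char pxy) => [h|h|[-> ->]].
  + by constructor 1.
  + by constructor 2.
  + by constructor 3; split; [left|right|rewrite ar8].
- by move=> i Ji; case/andP: (W2 i) => _ /implyP; apply.
- move=> i Ji; apply: ltn_trans sac; by case/andP: (W2 i) => _ /implyP; apply.
- by move=> h; exfalso; apply: (irr Hpop' (trn Hpop' h Hpk')).
Qed.

End Perm.
Section Cls.
Variable n' : nat.
Local Notation N := n'.+1.

Definition cls (s0 : 'S_N) : {set 'S_N} :=
  [set s : 'S_N | [forall c, (~~ dom s0 c ==> (s c == s0 c)) && (dom s0 c ==> occ s0 c (s c))]].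

Lemma clsE s0 s : s \in cls s0 ->
  (forall c, ~~ dom s0 c -> s c = s0 c) /\ (forall c, dom s0 c -> occ s0 c (s c)).
Proof.
rewrite inE => /forallP H; split => c.
  by case/andP: (H c) => /implyP h _ /h /eqP.
by case/andP: (H c) => _ /implyP.
Qed.

Lemma cls_occ s0 s : s \in cls s0 -> forall a v, occ s a v = occ s0 a v.
Proof. by case/clsE => H1 H2; apply: occ_transfer. Qed.

Lemma cls_dom s0 s : s \in cls s0 -> forall c, dom s c = dom s0 c.
Proof.
move=> sc c; rewrite /dom (cls_occ sc); case/clsE: sc => H1 H2.
case D: (dom s0 c); first by rewrite (H2 c D).
by rewrite H1 ?D.
Qed.

Lemma cls_refl s0 : s0 \in cls s0.
Proof. by rewrite inE; apply/forallP => c; rewrite eqxx implybT /= /dom implybb. Qed.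

Lemma cls_eq s0 s : s \in cls s0 -> cls s = cls s0.
Proof.
move=> sc; have [H1 H2] := clsE sc.
apply/setP => u; rewrite !inE; apply: eq_forallb => c.
rewrite (cls_dom sc) (cls_occ sc).
case D: (dom s0 c) => //=.
by rewrite H1 ?D.
Qed.

Definition Ls (s0 : 'S_N) := [seq c <- enum 'I_N | dom s0 c].
Definition sq (s0 : 'S_N) := map (fun c : 'I_N => nat_of_ord c) (Ls s0).
Definition Vq (s0 : 'S_N) := map (fun c => nat_of_ord (s0 c)) (Ls s0).
Definition Phi (s0 s : 'S_N) := map (fun c => nat_of_ord (s c)) (Ls s0).

Lemma Ls_uniq s0 : uniq (Ls s0).
Proof. by rewrite filter_uniq // enum_uniq. Qed.

Lemma Ls_sorted s0 : sorted (fun x y : 'I_N => x < y) (Ls s0).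
Proof.
apply: sorted_filter; first by move=> x y z; apply: ltn_trans.
have : sorted ltn (map (fun c : 'I_N => nat_of_ord c) (enum 'I_N)).
  by rewrite val_enum_ord iota_ltn_sorted.
by rewrite sorted_map.
Qed.

Lemma sq_sorted s0 : sorted ltn (sq s0).
Proof. by rewrite /sq sorted_map; apply: Ls_sorted. Qed.

Lemma inj_val_perm (s : 'S_N) : injective (fun c => nat_of_ord (s c)).
Proof. by move=> x y /val_inj /perm_inj. Qed.

Lemma Vq_uniq s0 : uniq (Vq s0).
Proof. by rewrite /Vq map_inj_uniq ?Ls_uniq //; apply: inj_val_perm. Qed.

Lemma memLs s0 c : (c \in Ls s0) = dom s0 c.
Proof. by rewrite mem_filter mem_enum andbT. Qed.

Lemma img_agree (s1 s2 : 'S_N) (D : pred 'I_N) :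
  (forall c, ~~ D c -> s1 c = s2 c) -> forall c, D c -> exists2 c', D c' & s2 c' = s1 c.
Proof.
move=> H c Dc; exists ((s2^-1)%g (s1 c)); last by rewrite permKV.
apply/negPn/negP => nD; have := H _ nD; rewrite permKV => /perm_inj E.
by move: Dc; rewrite -E (negbTE nD).
Qed.

Lemma perm_Phi s0 s : s \in cls s0 -> perm_eq (Phi s0 s) (Vq s0).
Proof.
move=> sc; have [H1 _] := clsE sc.
apply: uniq_perm; last 1 first.
- move=> v; apply/mapP/mapP => [[c cL ->]|[c cL ->]].
    rewrite memLs in cL.
    have [c' Dc' E] := @img_agree s s0 (dom s0) H1 c cL.
    by exists c'; rewrite ?memLs // E.
  rewrite memLs in cL.
  have [c' Dc' E] := @img_agree s0 s (dom s0) (fun c h => esym (H1 c h)) c cL.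
  by exists c'; rewrite ?memLs // E.
- by rewrite /Phi map_inj_uniq ?Ls_uniq //; apply: inj_val_perm.
- exact: Vq_uniq.
Qed.

Lemma all2_Phi s0 s : s \in cls s0 -> all2 (occ s0) (sq s0) (Phi s0 s).
Proof.
move=> sc; have [_ H2] := clsE sc.
rewrite all2_map; apply/allP => c; rewrite memLs; exact: H2.
Qed.

Lemma okP_Phi s0 s : s \in cls s0 -> okP (occ s0) (sq s0) (Phi s0 s) = ~~ contains_pop k p s.
Proof.
move=> sc; rewrite okP_map (@allpo_sorted _ (fun x y : 'I_N => x < y)) ?Ls_sorted //;
  last 2 first.
- by move=> x; rewrite ltnn.
- by move=> x y z; apply: ltn_trans.
rewrite contP; apply/idP/idP.
  move=> /allP H; apply/existsPn => a; apply/existsPn => c.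
  apply/negP => /andP[/andP[ac oc] ca].
  have aL : a \in Ls s0.
    rewrite memLs -(cls_dom sc) /dom; exact: occ_mono (leqnn _) (ltnW ca) oc.
  have cL : c \in Ls s0.
    rewrite memLs -(cls_dom sc) /dom.
    exact: occ_mono (ltnW (ltnW ac)) (leqnn _) oc.
  move/allP: (H a aL) => /(_ c cL).
  by rewrite (ltn_trans (ltnSn a) ac) ac -(cls_occ sc) oc ca.
move=> /existsPn H; apply/allP => x xL; apply/allP => y yL; apply/implyP => _.
apply/implyP => xy; apply/negP => /andP[o yx].
move/existsPn: (H x) => /(_ y); rewrite xy (cls_occ sc) o yx.
by [].
Qed.

Lemma okQ_Phi s0 s : s \in cls s0 -> okQ (sq s0) (Phi s0 s) = ~~ contains_pop k p' s.
Proof.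
move=> sc; rewrite okQ_map (@allpo_sorted _ (fun x y : 'I_N => x < y)) ?Ls_sorted //;
  last 2 first.
- by move=> x; rewrite ltnn.
- by move=> x y z; apply: ltn_trans.
rewrite contQ; apply/idP/idP.
  move=> /allP H; apply/existsPn => a; apply/existsPn => c.
  apply/negP => /andP[/andP[ac oa] ac'].
  have aL : a \in Ls s0 by rewrite memLs -(cls_dom sc).
  have cL : c \in Ls s0.
    rewrite memLs -(cls_dom sc) /dom.
    exact: occ_mono (ltnW (ltnW ac)) (ltnW ac') oa.
  move/allP: (H a aL) => /(_ c cL).
  by rewrite (ltn_trans (ltnSn a) ac) ac ac'.
move=> /existsPn H; apply/allP => x xL; apply/allP => y yL; apply/implyP => _.
apply/implyP => xy; apply/negP => yx.
move/existsPn: (H x) => /(_ y); rewrite xy yx andbT /=.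
by rewrite memLs -(cls_dom sc) /dom in xL; rewrite xL.
Qed.

Lemma Phi_inj s0 s1 s2 : s1 \in cls s0 -> s2 \in cls s0 -> Phi s0 s1 = Phi s0 s2 -> s1 = s2.
Proof.
move=> c1 c2 E; apply/permP => c.
case D: (dom s0 c).
  move/eq_in_map: E => /(_ c); rewrite memLs D => /(_ isT) /val_inj //.
by rewrite (clsE c1).1 ?D // (clsE c2).1 ?D.
Qed.

Lemma sur_ex s0 t : perm_eq t (Vq s0) -> all2 (occ s0) (sq s0) t ->
  exists2 s, s \in cls s0 & Phi s0 s = t.
Proof.
move=> pt a2.
have st : size t = size (Ls s0) by rewrite (perm_size pt) size_map.
have ut : uniq t by rewrite (perm_uniq pt) Vq_uniq.
have tv : forall i, i < size (Ls s0) -> exists2 c', c' \in Ls s0 & nth 0 t i = s0 c'.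
  move=> i iL; have : nth 0 t i \in Vq s0 by rewrite -(perm_mem pt) mem_nth // st.
  by case/mapP => c' c'L ->; exists c'.
pose f (c : 'I_N) : 'I_N := if dom s0 c then inord (nth 0 t (index c (Ls s0))) else s0 c.
have iL : forall c, dom s0 c -> index c (Ls s0) < size (Ls s0).
  by move=> c D; rewrite index_mem memLs.
have fv : forall c, dom s0 c -> nat_of_ord (f c) = nth 0 t (index c (Ls s0)).
  move=> c D; rewrite /f D inordK //.
  by have [c' _ ->] := tv _ (iL c D); rewrite ltn_ord.
have finj : injective f.
  move=> c1 c2 E; have E' := congr1 (fun x : 'I_N => nat_of_ord x) E; move: E'.
  case D1: (dom s0 c1); case D2: (dom s0 c2).
  - rewrite !fv // => /eqP; rewrite nth_uniq ?st ?iL // => /eqP Ei.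
    have h1 : nth c1 (Ls s0) (index c1 (Ls s0)) = c1 by rewrite nth_index // memLs.
    have h2 : nth c1 (Ls s0) (index c2 (Ls s0)) = c2 by rewrite nth_index // memLs.
    by rewrite -h1 Ei h2.
  - rewrite (fv c1) // /f D2; have [c' c'L ->] := tv _ (iL c1 D1) => /val_inj /perm_inj E2.
    by move: c'L; rewrite E2 memLs D2.
  - rewrite (fv c2) // /f D1; have [c' c'L ->] := tv _ (iL c2 D2) => /val_inj /perm_inj E2.
    by move: c'L; rewrite -E2 memLs D1.
  - by rewrite /f D1 D2 => /val_inj /perm_inj.
exists (perm finj).
  rewrite inE; apply/forallP => c; rewrite permE.
  case D: (dom s0 c) => /=; last by rewrite /f D eqxx.
  rewrite fv //.
  have := all2_nth a2 (i := index c (Ls s0)); rewrite size_map => /(_ (iL c D)).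
  by rewrite /sq (nth_map c) ?iL // nth_index // memLs.
apply: (@eq_from_nth _ 0); first by rewrite size_map st.
move=> i; rewrite size_map => il.
have cL : nth ord0 (Ls s0) i \in Ls s0 by rewrite mem_nth.
rewrite (nth_map ord0) // permE fv -?memLs // index_uniq //.
exact: Ls_uniq.
Qed.

Lemma card_P s0 : #|[set s in cls s0 | ~~ contains_pop k p s]| = FP (occ s0) (sq s0) (Vq s0).
Proof.
rewrite /FP cardE -(size_map (Phi s0)); symmetry; apply: count_perms_eq.
  rewrite map_inj_in_uniq ?enum_uniq //.
  by move=> x y; rewrite !mem_enum => /setIdP[xc _] /setIdP[yc _]; exact: Phi_inj.
move=> t; apply/mapP/idP.
  case=> s; rewrite mem_enum => /setIdP[sc av] ->.
  by rewrite perm_Phi //= /validP all2_Phi // okP_Phi.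
case/andP => pt /andP[a2 ok]; have [s sc E] := sur_ex pt a2.
by exists s => //; rewrite mem_enum; apply/setIdP; split => //; rewrite -(okP_Phi sc) E.
Qed.

Lemma card_Q s0 : #|[set s in cls s0 | ~~ contains_pop k p' s]| = FQ (occ s0) (sq s0) (Vq s0).
Proof.
rewrite /FQ cardE -(size_map (Phi s0)); symmetry; apply: count_perms_eq.
  rewrite map_inj_in_uniq ?enum_uniq //.
  by move=> x y; rewrite !mem_enum => /setIdP[xc _] /setIdP[yc _]; exact: Phi_inj.
move=> t; apply/mapP/idP.
  case=> s; rewrite mem_enum => /setIdP[sc av] ->.
  by rewrite perm_Phi //= /validQ all2_Phi // okQ_Phi.
case/andP => pt /andP[a2 ok]; have [s sc E] := sur_ex pt a2.
by exists s => //; rewrite mem_enum; apply/setIdP; split => //; rewrite -(okQ_Phi sc) E.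
Qed.

Lemma class_eq s0 : #|[set s in cls s0 | ~~ contains_pop k p s]| =
  #|[set s in cls s0 | ~~ contains_pop k p' s]|.
Proof.
rewrite card_P card_Q.
have Hm : forall a a' v v' : nat, a <= a' -> v <= v' -> occ s0 a v -> occ s0 a' v'.
  by move=> a a' v v'; apply: occ_mono.
have szs : size (Vq s0) = size (sq s0) by rewrite /Vq /sq !size_map.
have H0 := (@core (occ s0) Hm (sq s0) (Vq s0) (Vq s0)).
have H1 := H0 (sq_sorted s0).
have H2 : (forall e, e \in sq s0 -> e.+1 \in sq s0 -> forall v, occ s0 e.+1 v -> occ s0 e v).
  move=> e /mapP[c cL ->] _ v; rewrite memLs in cL; exact: (occ_adj cL).
have H3 := H1 H2 (Vq_uniq s0) (Vq_uniq s0) szs szs.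
by apply: H3.
Qed.

Lemma card_part (T U : finType) (A : {set T}) (f : T -> U) :
  #|A| = \sum_(u : U) #|[set x in A | f x == u]|.
Proof.
rewrite -sum1_card (partition_big f predT) //=.
apply: eq_bigr => u _; rewrite -sum1_card; apply: eq_bigl => x.
by rewrite inE.
Qed.

Lemma av_eq : #|[set s : 'S_N | ~~ contains_pop k p s]| = #|[set s : 'S_N | ~~ contains_pop k p' s]|.
Proof.
rewrite (card_part _ (@cls)) [RHS](card_part _ (@cls)).
apply: eq_bigr => K _.
case: (pickP (fun s0 => cls s0 == K)) => [s0 /eqP E | none].
  have H : forall q, [set x in [set s : 'S_N | ~~ contains_pop k q s] | cls x == K] =
                     [set s in cls s0 | ~~ contains_pop k q s].
    move=> q; apply/setP => s; apply/idP/idP.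
      move/setIdP => [sA /eqP sK]; apply/setIdP; split; last by move: sA; rewrite inE.
      by rewrite E -sK; exact: cls_refl.
    move/setIdP => [sc av]; apply/setIdP; split; first by rewrite inE.
    by rewrite (cls_eq sc) E.
  by rewrite !H class_eq.
have H : forall q, [set x in [set s : 'S_N | ~~ contains_pop k q s] | cls x == K] = set0.
  move=> q; apply/setP => s; rewrite in_set0; apply/negP => /setIdP[_ /eqP sK].
  by move: (none s); rewrite sK eqxx.
by rewrite !H.
Qed.

End Cls.

End Bridge.

Lemma sub3 m : m.+4 - 3 = m.+1. Proof. lia. Qed.
Lemma sub2 m : m.+4 - 2 = m.+2. Proof. lia. Qed.
Lemma sub1 m : m.+4 - 1 = m.+3. Proof. lia. Qed.

Theorem theorem1p3 (k : nat) (p p' : rel nat) :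
  4 <= k ->
  is_pop k p -> is_pop k p' ->
  (* same set I of isolated vertices *)
  (forall x, in_k k x -> isolated k p x = isolated k p' x) ->
  isolated k p (k - 1) ->
  ~~ isolated k p (k - 3) -> ~~ isolated k p (k - 2) -> ~~ isolated k p k ->
  (* k-2 and k lie above every x in [k-3] \ I, in p and in p' *)
  (forall x, 1 <= x <= k - 3 -> ~~ isolated k p x ->
     p x (k - 2) && p x k) ->
  (forall x, 1 <= x <= k - 3 -> ~~ isolated k p x ->
     p' x (k - 2) && p' x k) ->
  (* the subposets induced on [k-3] \ I coincide *)
  (forall x y, 1 <= x <= k - 3 -> 1 <= y <= k - 3 ->
     ~~ isolated k p x -> ~~ isolated k p y -> p x y = p' x y) ->
  p k (k - 2) -> p' (k - 2) k ->
  wilf_equiv k p p'.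
Proof.
move=> k4; have [m ->] : exists m, k = m.+4 by exists (k - 4); lia.
rewrite sub3 sub2 sub1 => Hpop Hpop' Hiso Hk1 Hk3 Hk2 Hk Ha Ha' Hs Hpk Hpk' n.
case: n => // n' _; rewrite /num_avoiders.
by apply: av_eq.
Qed.
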